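(* Let $X$ be a pre-metric locale. The canonical map $i:X\to\widetilde{X}$ is fiberwise dense, and $\widetilde{X}$ is locally positive.
   Context: Constructive setting (internal to an elementary topos with natural numbers object). Positive open: any cover of it by opens is indexed by an inhabited set; locally positive locale: every open is a union of positive opens. A pre-metric locale is a locally positive locale $X$ with $d:X\times X\to\overleftarrow{\mathbb{R}_+^\infty}$ (upper reals in $[0,\infty]$) symmetric, zero on the diagonal, with the triangle inequality; $\Delta_q=d^*([0,q[)$; $\delta(U)<q$ iff $U\times U\subseteq\Delta_{q'}$ for some $q'<q$; $U\triangleleft V$ iff $\pi_1^*U\wedge\Delta_q\le\pi_2^*V$ for some $q>0$. The completion $\widetilde{X}$ is the locale classifying regular Cauchy filters on $X$ (subsets $\mathcal{F}$ of positive opens, upward closed, downward directed within $\mathcal{F}$, with elements of arbitrarily small diameter, and with each $U\in\mathcal{F}$ having $V\in\mathcal{F}$, $V\triangleleft U$); $U^\sim$ denotes the open ''$U\in\mathcal{F}$'', and $i$ is given by $i^*(U^\sim)=\bigvee_{V\triangleleft U}V$. A map $g:M\to L$ is fiberwise dense if $p^*(U)=g_*g^*p^*(U)$ for every proposition $U$ ($p:L\to 1$). *)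

(* Defs.v *)
From Stdlib Require Import QArith List.
Import ListNotations.
Open Scope Q_scope.

(** * Frames (= opens of a locale), presented by their operations.
    Joins are indexed by subsets (predicates) of the carrier; a join of a
    family (I, f) is the join of the image of f. *)
Record FrameOps := {
  fcar  : Type;
  fle   : fcar -> fcar -> Prop;
  ftop  : fcar;
  fmeet : fcar -> fcar -> fcar;
  fjoin : (fcar -> Prop) -> fcar }.

Arguments fle {_} _ _.
Arguments ftop {_}.
Arguments fmeet {_} _ _.
Arguments fjoin {_} _.

Definition feq {F : FrameOps} (a b : fcar F) : Prop := fle a b /\ fle b a.

Definition is_frame (F : FrameOps) : Prop :=
  (forall a : fcar F, fle a a) /\
  (forall a b c : fcar F, fle a b -> fle b c -> fle a c) /\
  (forall a : fcar F, fle a ftop) /\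
  (forall a b : fcar F, fle (fmeet a b) a) /\
  (forall a b : fcar F, fle (fmeet a b) b) /\
  (forall a b c : fcar F, fle c a -> fle c b -> fle c (fmeet a b)) /\
  (forall (S : fcar F -> Prop) a, S a -> fle a (fjoin S)) /\
  (forall (S : fcar F -> Prop) b, (forall a, S a -> fle a b) -> fle (fjoin S) b) /\
  (forall (a : fcar F) (S : fcar F -> Prop),
      fle (fmeet a (fjoin S)) (fjoin (fun c => exists b, S b /\ c = fmeet a b))).

Definition positive {F : FrameOps} (U : fcar F) : Prop :=
  forall S : fcar F -> Prop, fle U (fjoin S) -> exists V, S V.

Definition locally_positive (F : FrameOps) : Prop :=
  forall U : fcar F, feq U (fjoin (fun V => positive V /\ fle V U)).

(** * Binary product of locales: frame coproduct, as C-ideals of A x B.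
    Elements are represented by generating sets of pairs; the order
    compares the generated C-ideals. *)
Definition prod_ideal (A B : FrameOps) (I : fcar A * fcar B -> Prop) : Prop :=
  (forall a b a' b', I (a, b) -> fle a' a -> fle b' b -> I (a', b')) /\
  (forall (S : fcar A -> Prop) b, (forall a, S a -> I (a, b)) -> I (fjoin S, b)) /\
  (forall a (S : fcar B -> Prop), (forall b, S b -> I (a, b)) -> I (a, fjoin S)).

Definition prod_cl (A B : FrameOps) (S : fcar A * fcar B -> Prop)
  (p : fcar A * fcar B) : Prop :=
  forall I, prod_ideal A B I -> (forall q, S q -> I q) -> I p.

Definition prodF (A B : FrameOps) : FrameOps := {|
  fcar  := fcar A * fcar B -> Prop;
  fle   := fun S T => forall p, S p -> prod_cl A B T p;
  ftop  := fun _ => True;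
  fmeet := fun S T p => prod_cl A B S p /\ prod_cl A B T p;
  fjoin := fun F p => exists S, F S /\ S p |}.

(** Projections (inverse image parts). *)
Definition pr1s {A B : FrameOps} (a : fcar A) : fcar (prodF A B) :=
  fun p => p = (a, ftop).
Definition pr2s {A B : FrameOps} (b : fcar B) : fcar (prodF A B) :=
  fun p => p = (ftop, b).
Definition rect {A B : FrameOps} (a : fcar A) (b : fcar B) : fcar (prodF A B) :=
  fun p => p = (a, b).

(** Pairing <f,g> : C -> A x B of locale maps, given by f^*, g^*. *)
Definition pairs {A B C : FrameOps} (f : fcar A -> fcar C) (g : fcar B -> fcar C)
  (S : fcar (prodF A B)) : fcar C :=
  fjoin (fun c => exists a b, S (a, b) /\ c = fmeet (f a) (g b)).

Section Premetric.
Variable X : FrameOps.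
Notation X2 := (prodF X X).
Notation X3 := (prodF (prodF X X) X).

Definition diag_s : fcar X2 -> fcar X := pairs (fun a => a) (fun a => a).
Definition swap_s : fcar X2 -> fcar X2 := pairs (@pr2s X X) (@pr1s X X).

Definition p31 (a : fcar X) : fcar X3 := pr1s (pr1s a).
Definition p32 (a : fcar X) : fcar X3 := pr1s (pr2s a).
Definition p33 (a : fcar X) : fcar X3 := pr2s a.
Definition p12_s : fcar X2 -> fcar X3 := pairs p31 p32.
Definition p23_s : fcar X2 -> fcar X3 := pairs p32 p33.
Definition p13_s : fcar X2 -> fcar X3 := pairs p31 p33.

(** A map d : X x X -> upper reals in [0,oo] is given by
    Delta q = d^*([0,q[), subject to the defining (roundness) relations
    of the frame of upper reals. *)
Definition upper_real_map (D : Q -> fcar X2) : Prop :=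
  forall q, feq (D q) (fjoin (fun W => exists q', 0 < q' /\ q' < q /\ W = D q')).

Definition premetric (D : Q -> fcar X2) : Prop :=
  is_frame X /\ locally_positive X /\ upper_real_map D /\
  (forall q, feq (swap_s (D q)) (D q)) /\
  (forall q, 0 < q -> feq (diag_s (D q)) ftop) /\
  (forall q r, 0 < q -> 0 < r ->
     fle (fmeet (p12_s (D q)) (p23_s (D r))) (p13_s (D (q + r)))).

Variable D : Q -> fcar X2.

Definition diam_lt (U : fcar X) (q : Q) : Prop :=
  exists q', q' < q /\ fle (rect U U : fcar X2) (D q').

Definition wi (U V : fcar X) : Prop :=
  exists q, 0 < q /\ fle (fmeet (pr1s U : fcar X2) (D q)) (pr2s V).

(** * The completion: locale classifying regular Cauchy filters.
    Generators: positive opens (U~ = "U in F").  Its frame is the frame of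
    ideals of the free meet-semilattice on the generators (finite lists,
    i.e. finite conjunctions) for the coverage given by the axioms. *)
Definition G : Type := { U : fcar X | positive U }.
Definition gv (U : G) : fcar X := proj1_sig U.

Definition compl_ideal (I : list G -> Prop) : Prop :=
  (* downward closure: more conjuncts = smaller *)
  (forall s t, I s -> incl s t -> I t) /\
  (* upward closed: U~ |- V~  for U <= V *)
  (forall s U V, fle (gv U) (gv V) -> In U s -> I (V :: s) -> I s) /\
  (* downward directed: U~ /\ V~ |- \/_{W <= U, W <= V} W~ *)
  (forall s U V, In U s -> In V s ->
     (forall W, fle (gv W) (gv U) -> fle (gv W) (gv V) -> I (W :: s)) -> I s) /\
  (* arbitrarily small: T |- \/_{delta(U) < q} U~   (q > 0) *)
  (forall s q, 0 < q -> (forall U, diam_lt (gv U) q -> I (U :: s)) -> I s) /\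
  (* regular: U~ |- \/_{V <| U} V~ *)
  (forall s U, In U s -> (forall V, wi (gv V) (gv U) -> I (V :: s)) -> I s).

Definition compl_cl (S : list G -> Prop) (s : list G) : Prop :=
  forall I, compl_ideal I -> (forall t, S t -> I t) -> I s.

Definition compl : FrameOps := {|
  fcar  := list G -> Prop;
  fle   := fun S T => forall s, S s -> compl_cl T s;
  ftop  := fun _ => True;
  fmeet := fun S T s => compl_cl S s /\ compl_cl T s;
  fjoin := fun F s => exists S, F S /\ S s |}.

Definition tilde (U : G) : fcar compl := fun s => s = [U].

Definition i_gen (U : G) : fcar X := fjoin (fun V => wi V (gv U)).
Definition i_star (S : fcar compl) : fcar X :=
  fjoin (fun W => exists s, S s /\ W = fold_right fmeet ftop (map i_gen s)).

End Premetric.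

Definition pstar (L : FrameOps) (P : Prop) : fcar L :=
  fjoin (fun a => P /\ a = ftop).

Definition lower_star {L M : FrameOps} (gs : fcar L -> fcar M) (b : fcar M) : fcar L :=
  fjoin (fun a => fle (gs a) b).

(** g : M -> L, given by its inverse image gs = g^* . *)
Definition fiberwise_dense (L M : FrameOps) (gs : fcar L -> fcar M) : Prop :=
  forall P : Prop, feq (pstar L P) (lower_star gs (gs (pstar L P))).

(* Main.v *)
Require Import Defs.
From Stdlib Require Import QArith List Lqa.
Import ListNotations.
Notation pos := Defs.positive.

Ltac frd HF := let a := fresh "Fr" in destruct HF as (a&?&?&?&?&?&?&?&?).

Lemma fr_refl (F : FrameOps) (HF : is_frame F) (a : fcar F) : fle a a.
Proof. frd HF; auto. Qed.
Lemma fr_trans (F : FrameOps) (HF : is_frame F) (a b c : fcar F) : fle a b -> fle b c -> fle a c.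
Proof. frd HF; eauto. Qed.
Lemma fr_top (F : FrameOps) (HF : is_frame F) (a : fcar F) : fle a ftop.
Proof. frd HF; auto. Qed.
Lemma fr_m1 (F : FrameOps) (HF : is_frame F) (a b : fcar F) : fle (fmeet a b) a.
Proof. frd HF; auto. Qed.
Lemma fr_m2 (F : FrameOps) (HF : is_frame F) (a b : fcar F) : fle (fmeet a b) b.
Proof. frd HF; auto. Qed.
Lemma fr_glb (F : FrameOps) (HF : is_frame F) (a b c : fcar F) : fle c a -> fle c b -> fle c (fmeet a b).
Proof. frd HF; auto. Qed.
Lemma fr_ub (F : FrameOps) (HF : is_frame F) (S : fcar F -> Prop) a : S a -> fle a (fjoin S).
Proof. frd HF; auto. Qed.
Lemma fr_lub (F : FrameOps) (HF : is_frame F) (S : fcar F -> Prop) b : (forall a, S a -> fle a b) -> fle (fjoin S) b.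
Proof. frd HF; auto. Qed.
Lemma fr_distr (F : FrameOps) (HF : is_frame F) (a : fcar F) (S : fcar F -> Prop) :
      fle (fmeet a (fjoin S)) (fjoin (fun c => exists b, S b /\ c = fmeet a b)).
Proof. frd HF; auto. Qed.

Lemma fr_ub' (F : FrameOps) (HF : is_frame F) (S : fcar F -> Prop) a c : S a -> fle c a -> fle c (fjoin S).
Proof. intros; eapply fr_trans; eauto using fr_ub. Qed.
Lemma fr_mmono (F : FrameOps) (HF : is_frame F) (a a' b b' : fcar F) :
  fle a a' -> fle b b' -> fle (fmeet a b) (fmeet a' b').
Proof. intros; apply fr_glb; auto; [eapply fr_trans; [auto|apply fr_m1; auto|auto]|eapply fr_trans; [auto|apply fr_m2; auto|auto]]. Qed.
Lemma fr_mcomm (F : FrameOps) (HF : is_frame F) (a b : fcar F) : fle (fmeet a b) (fmeet b a).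
Proof. intros; apply fr_glb; auto using fr_m1, fr_m2. Qed.
Lemma fr_distr_r (F : FrameOps) (HF : is_frame F) (a : fcar F) (S : fcar F -> Prop) :
      fle (fmeet (fjoin S) a) (fjoin (fun c => exists b, S b /\ c = fmeet b a)).
Proof.
  eapply fr_trans; [auto|apply fr_mcomm; auto|].
  eapply fr_trans; [auto|apply fr_distr; auto|].
  apply fr_lub; auto. intros c (b&Hb&->). eapply fr_ub'; eauto. apply fr_mcomm; auto.
Qed.
Lemma fr_le_distr (F : FrameOps) (HF : is_frame F) (x : fcar F) (S : fcar F -> Prop) :
  fle x (fjoin S) -> fle x (fjoin (fun c => exists b, S b /\ c = fmeet x b)).
Proof.
  intros H. eapply fr_trans; [auto| |apply fr_distr; auto].
  apply fr_glb; auto using fr_refl.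
Qed.
Lemma fr_pos_up (F : FrameOps) (HF : is_frame F) (a b : fcar F) : pos a -> fle a b -> pos b.
Proof. intros Ha Hab S HS. apply Ha. eapply fr_trans; eauto. Qed.
Lemma fr_lp_cover (F : FrameOps) (LP : locally_positive F) (a : fcar F) :
  fle a (fjoin (fun V => pos V /\ fle V a)).
Proof. apply LP. Qed.
Lemma fr_lp_reduce (F : FrameOps) (HF : is_frame F) (LP : locally_positive F) (x b : fcar F) :
  (forall P, pos P -> fle P x -> fle P b) -> fle x b.
Proof.
  intros H. eapply fr_trans; [auto|apply fr_lp_cover; auto|].
  apply fr_lub; auto. intros a [Ha1 Ha2]; auto.
Qed.
Lemma fr_pos_join (F : FrameOps) (HF : is_frame F) (LP : locally_positive F) (S : fcar F -> Prop) :
  pos (fjoin S) -> exists a, S a /\ pos a.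
Proof.
  intros Hp.
  destruct (Hp (fun P => pos P /\ exists a, S a /\ fle P a)) as (P&HP&a&Ha&HPa).
  - apply fr_lub; auto. intros a Ha. apply fr_lp_reduce; auto.
    intros P HP HPa. apply fr_ub; auto. eauto.
  - exists a; split; auto. eapply fr_pos_up; eauto.
Qed.

Lemma cl_ideal (A B : FrameOps) S : prod_ideal A B (prod_cl A B S).
Proof.
  split; [|split].
  - intros a b a' b' H Ha Hb I HI HS. destruct (HI) as [H1 _]. exact (H1 _ _ _ _ (H I HI HS) Ha Hb).
  - intros S' b H I HI HS. destruct (HI) as (_&H2&_). apply H2. intros a Ha. exact (H a Ha I HI HS).
  - intros a S' H I HI HS. destruct (HI) as (_&_&H3). apply H3. intros b Hb. exact (H b Hb I HI HS).
Qed.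
Lemma cl_incl (A B : FrameOps) S p : S p -> prod_cl A B S p.
Proof. intros H I _ HS; auto. Qed.
Lemma cl_sub (A B : FrameOps) S T p : (forall q, S q -> prod_cl A B T q) -> prod_cl A B S p -> prod_cl A B T p.
Proof. intros H Hp. apply Hp; auto using cl_ideal. Qed.
Lemma cl_down (A B : FrameOps) S a b a' b' : prod_cl A B S (a,b) -> fle a' a -> fle b' b -> prod_cl A B S (a',b').
Proof. intros H1 H2 H3. destruct (cl_ideal A B S) as [H _]. eauto. Qed.
Lemma cl_j1 (A B : FrameOps) S S' b : (forall a, S' a -> prod_cl A B S (a,b)) -> prod_cl A B S (fjoin S', b).
Proof. intros H0. destruct (cl_ideal A B S) as (_&H&_). eauto. Qed.
Lemma cl_j2 (A B : FrameOps) S a S' : (forall b, S' b -> prod_cl A B S (a,b)) -> prod_cl A B S (a, fjoin S').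
Proof. intros H0. destruct (cl_ideal A B S) as (_&_&H). eauto. Qed.

Lemma cl_meet (A B : FrameOps) (HA : is_frame A) (HB : is_frame B) S T p :
  prod_cl A B S p -> prod_cl A B T p ->
  prod_cl A B (fun r => exists x y x' y', S (x,y) /\ T (x',y') /\ r = (fmeet x x', fmeet y y')) p.
Proof.
  set (M := fun r : fcar A * fcar B => exists x y x' y', S (x,y) /\ T (x',y') /\ r = (fmeet x x', fmeet y y')).
  intros HS HT.
  set (J1 := fun r : fcar A * fcar B => forall c d, prod_cl A B T (c,d) ->
              prod_cl A B M (fmeet (fst r) c, fmeet (snd r) d)).
  assert (HJ1 : J1 p).
  { apply HS.
    - split; [|split].
      + intros a b a' b' H Ha Hb c d Hcd. simpl. eapply cl_down; [apply (H c d Hcd)| |]; simpl;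
        apply fr_mmono; auto using fr_refl.
      + intros S' b H c d Hcd. simpl.
        eapply cl_down; [|apply fr_distr_r; auto|apply fr_refl; auto].
        apply cl_j1. intros z (a&Ha&->). apply (H a Ha c d Hcd).
      + intros a S' H c d Hcd. simpl.
        eapply cl_down; [|apply fr_refl; auto|apply fr_distr_r; auto].
        apply cl_j2. intros z (b&Hb&->). apply (H b Hb c d Hcd).
    - intros [x y] Hxy c d Hcd. simpl.
      set (J2 := fun r : fcar A * fcar B => prod_cl A B M (fmeet x (fst r), fmeet y (snd r))).
      change (J2 (c,d)). apply Hcd.
      + split; [|split].
        * intros a b a' b' H Ha Hb. unfold J2 in *; simpl in *. eapply cl_down; eauto;
          apply fr_mmono; auto using fr_refl.
        * intros S' b H. unfold J2 in *; simpl in *.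
          eapply cl_down; [|apply fr_distr; auto|apply fr_refl; auto].
          apply cl_j1. intros z (a&Ha&->). apply (H a Ha).
        * intros a S' H. unfold J2 in *; simpl in *.
          eapply cl_down; [|apply fr_refl; auto|apply fr_distr; auto].
          apply cl_j2. intros z (b&Hb&->). apply (H b Hb).
      + intros [x' y'] H'. unfold J2; simpl. apply cl_incl. exists x, y, x', y'; auto. }
  destruct p as [p1 p2]. specialize (HJ1 p1 p2 HT). simpl in HJ1.
  eapply cl_down; eauto; apply fr_glb; auto using fr_refl.
Qed.

Lemma prodF_frame (A B : FrameOps) (HA : is_frame A) (HB : is_frame B) : is_frame (prodF A B).
Proof.
  split; [|split; [|split; [|split; [|split; [|split; [|split; [|split]]]]]]]; cbn.
  - intros a p Hp. apply cl_incl; auto.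
  - intros a b c H1 H2 p Hp. eapply cl_sub; [apply H2|apply H1; auto].
  - intros a p Hp. apply cl_incl; auto.
  - intros a b p [H _]; auto.
  - intros a b p [_ H]; auto.
  - intros a b c H1 H2 p Hp. apply cl_incl. split; auto.
  - intros S a Ha p Hp. apply cl_incl. exists a; auto.
  - intros S b H p (a&Ha&Hp). exact (H a Ha p Hp).
  - intros a S p [H1 H2].
    pose proof (cl_meet A B HA HB _ _ _ H1 H2) as H.
    eapply cl_sub; [|exact H].
    intros q (x&y&x'&y'&Hxy&(b&Hb&Hb')&->). apply cl_incl.
    exists (fun p => prod_cl A B a p /\ prod_cl A B b p). split; [eauto|].
    split; eapply cl_down; try apply cl_incl; eauto; auto using fr_m1, fr_m2.
Qed.

Definition jmap {A C : FrameOps} (f : fcar A -> fcar C) :=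
  (forall a b, fle a b -> fle (f a) (f b)) /\
  (forall S, fle (f (fjoin S)) (fjoin (fun c => exists a, S a /\ c = f a))).

Lemma jmap_id (A : FrameOps) (HA : is_frame A) : @jmap A A (fun a => a).
Proof.
  split; auto. intros S. apply fr_lub; auto. intros a Ha. apply fr_ub; eauto.
Qed.

Lemma jmap_comp (A B C : FrameOps) (HB : is_frame B) (HC : is_frame C)
  (f : fcar A -> fcar B) (g : fcar B -> fcar C) : jmap f -> jmap g -> jmap (fun a => g (f a)).
Proof.
  intros [f1 f2] [g1 g2]. split; auto.
  intros S. eapply fr_trans; [auto|apply g1; apply f2|].
  eapply fr_trans; [auto|apply g2|].
  apply fr_lub; auto. intros c (b&(a&Ha&->)&->). apply fr_ub; eauto.
Qed.

Lemma jmap_pr1s (A B : FrameOps) (HA : is_frame A) (HB : is_frame B) : jmap (@pr1s A B).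
Proof.
  split.
  - intros a b H p Hp. cbn in *. unfold pr1s, pr2s in *. subst p. eapply cl_down; [apply cl_incl; reflexivity|auto|apply fr_refl; auto].
  - intros S p Hp. cbn in *. unfold pr1s, pr2s in *. subst p. apply cl_j1. intros a Ha. apply cl_incl.
    exists (pr1s a). split; [eauto|reflexivity].
Qed.

Lemma jmap_pr2s (A B : FrameOps) (HA : is_frame A) (HB : is_frame B) : jmap (@pr2s A B).
Proof.
  split.
  - intros a b H p Hp. cbn in *. unfold pr1s, pr2s in *. subst p. eapply cl_down; [apply cl_incl; reflexivity|apply fr_refl; auto|auto].
  - intros S p Hp. cbn in *. unfold pr1s, pr2s in *. subst p. apply cl_j2. intros a Ha. apply cl_incl.
    exists (pr2s a). split; [eauto|reflexivity].
Qed.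

Lemma pairs_mono (A B C : FrameOps) (HA : is_frame A) (HB : is_frame B) (HC : is_frame C)
  (f : fcar A -> fcar C) (g : fcar B -> fcar C) (Hf : jmap f) (Hg : jmap g)
  (S T : fcar (prodF A B)) : fle S T -> fle (pairs f g S) (pairs f g T).
Proof.
  intros H. unfold pairs. apply fr_lub; auto. intros c (a&b&Hab&->).
  specialize (H _ Hab).
  set (J := fun r : fcar A * fcar B => fle (fmeet (f (fst r)) (g (snd r))) (pairs f g T)).
  change (J (a,b)). apply H.
  - destruct Hf as [f1 f2]; destruct Hg as [g1 g2].
    split; [|split]; unfold J; cbn.
    + intros x y x' y' H1 H2 H3. eapply fr_trans; [auto| |exact H1]. apply fr_mmono; auto.
    + intros S' y H1. eapply fr_trans; [auto|apply fr_mmono; [auto|apply f2|apply fr_refl; auto]|].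
      eapply fr_trans; [auto|apply fr_distr_r; auto|].
      apply fr_lub; auto. intros c0 (c1&(x&Hx&->)&->). apply H1; auto.
    + intros x S' H1. eapply fr_trans; [auto|apply fr_mmono; [auto|apply fr_refl; auto|apply g2]|].
      eapply fr_trans; [auto|apply fr_distr; auto|].
      apply fr_lub; auto. intros c0 (c1&(y&Hy&->)&->). apply H1; auto.
  - intros [x y] Hxy. unfold J; cbn. unfold pairs. apply fr_ub; auto. eauto.
Qed.

Lemma cl_gen (A B : FrameOps) (S : fcar A * fcar B -> Prop) a b a' b' :
  S (a,b) -> fle a' a -> fle b' b -> prod_cl A B S (a',b').
Proof. intros. eapply cl_down; [apply cl_incl; eauto|auto|auto]. Qed.

Ltac pmd HP := let HX := fresh "HX" in let LP := fresh "LP" in let UR := fresh "UR" in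
  let SY := fresh "SY" in let DG := fresh "DG" in let TR := fresh "TR" in
  destruct HP as (HX&LP&UR&SY&DG&TR).

Lemma pm_fr X D : premetric X D -> is_frame X.
Proof. intros H; pmd H; auto. Qed.
Lemma pm_lp X D : premetric X D -> locally_positive X.
Proof. intros H; pmd H; auto. Qed.
Lemma pm_fr2 X D : premetric X D -> is_frame (prodF X X).
Proof. intros H; pmd H; auto using prodF_frame. Qed.
Lemma pm_fr3 X D : premetric X D -> is_frame (prodF (prodF X X) X).
Proof. intros H; pmd H; auto using prodF_frame. Qed.

Lemma D_mono X D (HP : premetric X D) q1 q2 : Qle q1 q2 -> fle (D q1) (D q2).
Proof.
  intros Hq. pose proof (pm_fr2 X D HP) as H2. pmd HP.
  eapply fr_trans; [auto|apply (proj1 (UR q1))|].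
  eapply fr_trans; [auto| |apply (proj2 (UR q2))].
  apply fr_lub; auto. intros W (q'&H1&H3&->). apply fr_ub; auto.
  exists q'; repeat split; auto. eapply Qlt_le_trans; eauto.
Qed.

Lemma proj1_pos X (HX : is_frame X) (LP : locally_positive X) (a x y : fcar X) :
  prod_cl X X (pr1s a) (x,y) -> pos y -> fle x a.
Proof.
  intros H.
  set (J := fun r : fcar X * fcar X => pos (snd r) -> fle (fst r) a).
  change (J (x,y)). apply H.
  - split; [|split]; unfold J; cbn.
    + intros x0 y0 x' y' H1 H2 H3 Hp. eapply fr_trans; [auto|exact H2|apply H1].
      eapply fr_pos_up; eauto.
    + intros S y0 H1 Hp. apply fr_lub; auto.
    + intros x0 S H1 Hp. destruct (fr_pos_join X HX LP S Hp) as (b&Hb&Hpb). eauto.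
  - intros q Hq. unfold pr1s in Hq. subst q. unfold J; cbn. intros _. apply fr_refl; auto.
Qed.

Lemma proj2_pos X (HX : is_frame X) (LP : locally_positive X) (b x y : fcar X) :
  prod_cl X X (pr2s b) (x,y) -> pos x -> fle y b.
Proof.
  intros H.
  set (J := fun r : fcar X * fcar X => pos (fst r) -> fle (snd r) b).
  change (J (x,y)). apply H.
  - split; [|split]; unfold J; cbn.
    + intros x0 y0 x' y' H1 H2 H3 Hp. eapply fr_trans; [auto|exact H3|apply H1].
      eapply fr_pos_up; eauto.
    + intros S y0 H1 Hp. destruct (fr_pos_join X HX LP S Hp) as (c&Hc&Hpc). eauto.
    + intros x0 S H1 Hp. apply fr_lub; auto.
  - intros q Hq. unfold pr2s in Hq. subst q. unfold J; cbn. intros _. apply fr_refl; auto.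
Qed.

Lemma proj13 X (HX : is_frame X) (LP : locally_positive X) (W : fcar (prodF X X)) (a b m : fcar X) :
  pos m -> prod_cl (prodF X X) X (p13_s X W) (rect a m, b) -> prod_cl X X W (a,b).
Proof.
  intros Hm H.
  assert (H2 : is_frame (prodF X X)) by auto using prodF_frame.
  set (J := fun r : fcar (prodF X X) * fcar X => forall x y, prod_cl X X (fst r) (x,y) -> pos y ->
             prod_cl X X W (x, snd r)).
  assert (HJ : prod_ideal (prodF X X) X J).
  { split; [|split]; unfold J; cbn.
    - intros u z u' z' H1 H3 H4 x y Hxy Hy.
      eapply cl_down; [apply (H1 x y); auto|apply fr_refl; auto|auto].
      eapply cl_sub; [exact H3|exact Hxy].
    - intros F z H1 x y Hxy Hy.
      set (K := fun r : fcar X * fcar X => pos (snd r) -> prod_cl X X W (fst r, z)).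
      revert Hy. change (K (x,y)). apply Hxy; auto.
      + split; [|split]; unfold K; cbn.
        * intros x0 y0 x' y' G1 G2 G3 Gp. eapply cl_down; [apply G1; eapply fr_pos_up; eauto|auto|apply fr_refl; auto].
        * intros S y0 G1 Gp. apply cl_j1. intros a0 Ha0. apply G1; auto.
        * intros x0 S G1 Gp. destruct (fr_pos_join X HX LP S Gp) as (c&Hc&Hpc). eauto.
      + intros [x0 y0] (u&Hu&Hu0). unfold K; cbn. intros Gp. apply (H1 u Hu x0 y0); auto. apply cl_incl; auto.
    - intros u S H1 x y Hxy Hy. apply cl_j2. intros b0 Hb0. apply (H1 b0 Hb0 x y); auto. }
  assert (Hg : forall q, p13_s X W q -> J q).
  { intros q (c&(a'&b'&HW&->)&Hc). cbn in Hc. destruct Hc as [Hc1 Hc2].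
    pose proof (cl_meet (prodF X X) X H2 HX _ _ _ Hc1 Hc2) as Hc.
    apply Hc; auto.
    intros r (u&y&u'&y'&G1&G2&->). unfold p31, p33, pr1s, pr2s in G1, G2.
    injection G1; intros; subst. injection G2; intros; subst.
    unfold J; cbn. intros x y Hxy Hy.
    assert (Hx : fle x a').
    { apply (proj1_pos X HX LP a' x y); auto. eapply cl_sub; [|exact Hxy]. intros q0 [Hq0 _]; auto. }
    eapply cl_gen; eauto. apply fr_m2; auto. }
  apply (H J HJ Hg a m); auto. apply cl_incl. reflexivity.
Qed.

Lemma jmap_p31 X (HX : is_frame X) : jmap (p31 X).
Proof.
  unfold p31. apply (jmap_comp X (prodF X X) (prodF (prodF X X) X)); auto using prodF_frame, jmap_pr1s.
Qed.
Lemma jmap_p32 X (HX : is_frame X) : jmap (p32 X).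
Proof.
  unfold p32. apply (jmap_comp X (prodF X X) (prodF (prodF X X) X)); auto using prodF_frame, jmap_pr1s, jmap_pr2s.
Qed.
Lemma jmap_p33 X (HX : is_frame X) : jmap (p33 X).
Proof. unfold p33. auto using prodF_frame, jmap_pr2s. Qed.

Lemma tri X D (HP : premetric X D) a m b s t : 0 < s -> 0 < t -> pos m ->
  fle (rect a m) (D s) -> fle (rect m b) (D t) -> fle (rect a b) (D (s + t)).
Proof.
  intros Hs Ht Hm H1 H3.
  pose proof (pm_fr2 X D HP) as H2. pose proof (pm_fr3 X D HP) as H33.
  pmd HP.
  intros p Hp. unfold rect in Hp. subst p.
  apply (proj13 X HX LP _ a b m Hm).
  apply (TR s t Hs Ht). cbn. split.
  - eapply cl_sub; [apply (pairs_mono X X _ HX HX H33 _ _ (jmap_p31 X HX) (jmap_p32 X HX) _ _ H1)|].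
    apply cl_incl. exists (fmeet (p31 X a) (p32 X m)). split; [exists a, m; split; reflexivity|].
    cbn. split.
    + eapply cl_gen; [reflexivity| |apply fr_top; auto].
      intros q Hq; unfold rect in Hq; subst q. eapply cl_gen; [reflexivity|apply fr_refl; auto|apply fr_top; auto].
    + eapply cl_gen; [reflexivity| |apply fr_top; auto].
      intros q Hq; unfold rect in Hq; subst q. eapply cl_gen; [reflexivity|apply fr_top; auto|apply fr_refl; auto].
  - eapply cl_sub; [apply (pairs_mono X X _ HX HX H33 _ _ (jmap_p32 X HX) (jmap_p33 X HX) _ _ H3)|].
    apply cl_incl. exists (fmeet (p32 X m) (p33 X b)). split; [exists m, b; split; reflexivity|].
    cbn. split.
    + eapply cl_gen; [reflexivity| |apply fr_top; auto].
      intros q Hq; unfold rect in Hq; subst q. eapply cl_gen; [reflexivity|apply fr_top; auto|apply fr_refl; auto].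
    + eapply cl_gen; [reflexivity| |apply fr_refl; auto].
      apply fr_top; auto.
Qed.

Lemma fr_massoc (F : FrameOps) (HF : is_frame F) (a b c : fcar F) :
  fle (fmeet a (fmeet b c)) (fmeet (fmeet a b) c).
Proof.
  apply fr_glb; auto; [apply fr_glb; auto|].
  - apply fr_m1; auto.
  - eapply fr_trans; [auto|apply fr_m2; auto|apply fr_m1; auto].
  - eapply fr_trans; [auto|apply fr_m2; auto|apply fr_m2; auto].
Qed.

Lemma sym X D (HP : premetric X D) x y q : fle (rect x y) (D q) -> fle (rect y x) (D q).
Proof.
  intros H. pose proof (pm_fr2 X D HP) as H2. pmd HP.
  eapply fr_trans; [auto| |eapply fr_trans; [auto|
     apply (pairs_mono X X (prodF X X) HX HX H2 _ _ (jmap_pr2s X X HX HX) (jmap_pr1s X X HX HX) _ _ H)|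
     apply (proj1 (SY q))]].
  intros p Hp. unfold rect in Hp. subst p. apply cl_incl.
  exists (fmeet (pr2s x) (pr1s y)). split; [exists x, y; split; reflexivity|].
  cbn. split; eapply cl_gen; try reflexivity; auto using fr_refl, fr_top.
Qed.

Lemma diag_wi X D (HP : premetric X D) a b : wi X D a b -> fle a b.
Proof.
  intros (q&Hq&H). pose proof (pm_fr2 X D HP) as H2. pmd HP.
  assert (S1 : fle (diag_s X (fmeet (pr1s a) (D q))) (diag_s X (pr2s b))).
  { apply pairs_mono; auto using jmap_id. }
  assert (S2 : fle (diag_s X (pr2s b)) b).
  { unfold diag_s, pairs. apply fr_lub; auto. intros c (x&y&Hxy&->).
    unfold pr2s in Hxy. injection Hxy; intros; subst. apply fr_m2; auto. }
  assert (S3 : fle a (diag_s X (fmeet (pr1s a) (D q)))).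
  { assert (T1 : fle a (fjoin (fun c => exists x y, D q (x,y) /\ c = fmeet x y))).
    { eapply fr_trans; [auto|apply fr_top; auto|]. apply (proj2 (DG q Hq)). }
    eapply fr_trans; [auto|apply fr_le_distr; [auto|exact T1]|].
    apply fr_lub; auto. intros c (b'&(x&y&Hxy&->)&->).
    unfold diag_s, pairs. eapply fr_ub'; auto.
    - exists (fmeet a x), y. split; [|reflexivity]. cbn. split.
      + eapply cl_gen; [reflexivity|apply fr_m1; auto|apply fr_top; auto].
      + eapply cl_gen; [exact Hxy|apply fr_m2; auto|apply fr_refl; auto].
    - apply fr_massoc; auto. }
  eapply fr_trans; [auto|exact S3|]. eapply fr_trans; [auto|exact S1|exact S2].
Qed.

Lemma wi_anti X D (HP : premetric X D) a a' b : fle a' a -> wi X D a b -> wi X D a' b.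
Proof.
  intros Ha (q&Hq&H). pose proof (pm_fr2 X D HP) as H2. pose proof (pm_fr X D HP) as HX.
  exists q; split; auto. eapply fr_trans; [auto| |exact H].
  apply fr_mmono; auto using fr_refl. apply (jmap_pr1s X X HX HX); auto.
Qed.

Lemma wi_mono2 X D (HP : premetric X D) a b b' : fle b b' -> wi X D a b -> wi X D a b'.
Proof.
  intros Hb (q&Hq&H). pose proof (pm_fr2 X D HP) as H2. pose proof (pm_fr X D HP) as HX.
  exists q; split; auto. eapply fr_trans; [auto|exact H|].
  apply (jmap_pr2s X X HX HX); auto.
Qed.

Lemma pr2s_meet X (HX : is_frame X) (b c : fcar X) :
  @fle (prodF X X) (fmeet (pr2s b) (pr2s c)) (pr2s (fmeet b c)).
Proof.
  intros p [H1 H3]. pose proof (cl_meet X X HX HX _ _ _ H1 H3) as H.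
  eapply cl_sub; [|exact H]. intros q (x&y&x'&y'&G1&G2&->).
  unfold pr2s in G1, G2. injection G1; injection G2; intros; subst.
  eapply cl_gen; [reflexivity|apply fr_top; auto|apply fr_refl; auto].
Qed.

Lemma wi_meet X D (HP : premetric X D) a b c : wi X D a b -> wi X D a c -> wi X D a (fmeet b c).
Proof.
  intros (q1&Hq1&H1) (q3&Hq3&H3). pose proof (pm_fr2 X D HP) as H2. pose proof (pm_fr X D HP) as HX.
  destruct (Qlt_le_dec q1 q3) as [h|h].
  - exists q1; split; auto. eapply fr_trans; [auto| |apply pr2s_meet; auto].
    apply fr_glb; auto. eapply fr_trans; [auto| |exact H3].
    apply fr_mmono; auto using fr_refl. apply D_mono; auto. apply Qlt_le_weak; auto.
  - exists q3; split; auto. eapply fr_trans; [auto| |apply pr2s_meet; auto].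
    apply fr_glb; auto. eapply fr_trans; [auto| |exact H1].
    apply fr_mmono; auto using fr_refl. apply D_mono; auto.
Qed.

Definition ball X (D : Q -> fcar (prodF X X)) (Y : fcar X) r :=
  fjoin (fun y => exists x, D r (x,y) /\ pos (fmeet x Y)).

Lemma ball_wi X D (HP : premetric X D) Y r : fle (fmeet (pr1s Y) (D r)) (pr2s (ball X D Y r)).
Proof.
  pose proof (pm_fr2 X D HP) as H2. pmd HP.
  intros p [H1 H3]. pose proof (cl_meet X X HX HX _ _ _ H1 H3) as H.
  eapply cl_sub; [|exact H]. intros q (x&y&x'&y'&G1&G2&->).
  unfold pr1s in G1. injection G1; intros; subst.
  eapply cl_down; [|apply fr_lp_cover; auto|apply fr_refl; auto].
  apply cl_j1. intros P (HPp&HPle).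
  eapply cl_gen; [reflexivity|apply fr_top; auto|].
  eapply fr_trans; [auto|apply fr_m2; auto|]. unfold ball. apply fr_ub; auto.
  exists x'. split; auto. eapply fr_pos_up; eauto. eapply fr_trans; [auto|exact HPle|apply fr_mcomm; auto].
Qed.

Lemma ball_ge X D (HP : premetric X D) Y r : 0 < r -> fle Y (ball X D Y r).
Proof. intros Hr. apply (diag_wi X D HP). exists r. split; auto. apply ball_wi; auto. Qed.

Lemma ball_interp X D (HP : premetric X D) P U q : 0 < q ->
  fle (fmeet (pr1s P) (D q)) (pr2s U) ->
  fle (fmeet (pr1s (ball X D P (q * (1#2)))) (D (q * (1#2)))) (pr2s U).
Proof.
  intros Hq HU. pose proof HP as HP'. pose proof (pm_fr2 X D HP) as H2. pmd HP.
  assert (Hr : 0 < q * (1#2)) by lra.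
  intros p [H1 H3]. pose proof (cl_meet X X HX HX _ _ _ H1 H3) as H.
  eapply cl_sub; [|exact H]. intros z (x0&y0&a&b&G1&G2&->).
  unfold pr1s in G1. injection G1; intros; subst.
  unfold ball. eapply cl_down; [|apply fr_distr_r; auto|apply fr_refl; auto].
  apply cl_j1. intros z (y&(x&Hxy&Hpx)&->).
  eapply cl_down; [|apply fr_lp_cover; auto|apply fr_refl; auto].
  apply cl_j1. intros Q (HQ&HQle).
  eapply cl_gen; [reflexivity|apply fr_top; auto|].
  eapply fr_trans; [auto|apply fr_m2; auto|].
  apply (proj2_pos X HX LP U (fmeet x P) b); [|exact Hpx].
  apply HU. cbn. split.
  - eapply cl_gen; [reflexivity|apply fr_m2; auto|apply fr_top; auto].
  - assert (T : fle (rect (fmeet x P) b) (D q)).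
    { eapply fr_trans; [auto| |apply (D_mono X D HP' (q * (1#2) + q * (1#2))); lra].
      apply (tri X D HP' _ Q _ _ _ Hr Hr HQ).
      - intros p0 Hp0; unfold rect in Hp0; subst p0. eapply cl_gen; [exact Hxy|apply fr_m1; auto|].
        eapply fr_trans; [auto|exact HQle|apply fr_m1; auto].
      - intros p0 Hp0; unfold rect in Hp0; subst p0. eapply cl_gen; [exact G2| |apply fr_refl; auto].
        eapply fr_trans; [auto|exact HQle|apply fr_m2; auto]. }
    apply T. reflexivity.
Qed.

Lemma ball_diam X D (HP : premetric X D) Y r : 0 < r -> fle (rect Y Y) (D r) ->
  fle (rect (ball X D Y r) (ball X D Y r)) (D (r + r + r)).
Proof.
  intros Hr HY. pose proof HP as HP'. pose proof (pm_fr2 X D HP) as H2. pmd HP.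
  assert (Hr2 : 0 < r + r) by lra.
  intros p Hp; unfold rect in Hp; subst p. unfold ball.
  apply cl_j1. intros y1 (x1&G1&Hp1). apply cl_j2. intros y2 (x3&G3&Hp3).
  refine (tri X D HP' y1 (fmeet x3 Y) y2 (r + r) r Hr2 Hr Hp3 _ _ _ eq_refl).
  - apply (tri X D HP' y1 (fmeet x1 Y) _ r r Hr Hr Hp1).
    + apply (sym X D HP'). intros p0 Hp0; unfold rect in Hp0; subst p0.
      eapply cl_gen; [exact G1|apply fr_m1; auto|apply fr_refl; auto].
    + intros p0 Hp0; unfold rect in Hp0; subst p0.
      eapply cl_down; [apply HY; reflexivity|apply fr_m2; auto|apply fr_m2; auto].
  - intros p0 Hp0; unfold rect in Hp0; subst p0.
    eapply cl_gen; [exact G3|apply fr_m1; auto|apply fr_refl; auto].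
Qed.

Definition ff X D (t : list (G X)) : fcar X := fold_right fmeet ftop (map (i_gen X D) t).

Lemma i_gen_ub X D (HP : premetric X D) Y U : wi X D Y (gv X U) -> fle Y (i_gen X D U).
Proof. intros H. unfold i_gen. apply fr_ub; eauto using pm_fr. Qed.

Lemma i_gen_mono X D (HP : premetric X D) U V : fle (gv X U) (gv X V) -> fle (i_gen X D U) (i_gen X D V).
Proof.
  intros H. pose proof (pm_fr X D HP) as HX. unfold i_gen at 1. apply fr_lub; auto.
  intros Y HY. apply i_gen_ub; auto. eapply wi_mono2; eauto.
Qed.

Lemma cover3 X D (HP : premetric X D) U V :
  fle (fmeet (i_gen X D U) (i_gen X D V))
      (fjoin (fun c => exists W, (fle (gv X W) (gv X U) /\ fle (gv X W) (gv X V)) /\ c = i_gen X D W)).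
Proof.
  pose proof (pm_fr X D HP) as HX. pose proof (pm_lp X D HP) as LP.
  apply fr_lp_reduce; auto. intros P HPp HPle.
  assert (T1 : fle P (i_gen X D U)) by (eapply fr_trans; [auto|exact HPle|apply fr_m1; auto]).
  assert (T2 : fle P (i_gen X D V)) by (eapply fr_trans; [auto|exact HPle|apply fr_m2; auto]).
  unfold i_gen at 1 in T1.
  eapply fr_trans; [auto|apply fr_le_distr; [auto|exact T1]|].
  apply fr_lub; auto. intros c (Y&HY&->).
  assert (T3 : fle (fmeet P Y) (i_gen X D V)) by (eapply fr_trans; [auto|apply fr_m1; auto|exact T2]).
  unfold i_gen at 1 in T3.
  eapply fr_trans; [auto|apply fr_le_distr; [auto|exact T3]|].
  apply fr_lub; auto. intros c (Y'&HY'&->).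
  apply fr_lp_reduce; auto. intros Q HQp HQle.
  assert (Q1 : wi X D Q (gv X U)).
  { eapply wi_anti; [auto| |exact HY]. eapply fr_trans; [auto|exact HQle|].
    eapply fr_trans; [auto|apply fr_m1; auto|apply fr_m2; auto]. }
  assert (Q2 : wi X D Q (gv X V)).
  { eapply wi_anti; [auto| |exact HY']. eapply fr_trans; [auto|exact HQle|apply fr_m2; auto]. }
  pose proof (wi_meet X D HP _ _ _ Q1 Q2) as Q3.
  assert (Hpos : pos (fmeet (gv X U) (gv X V))).
  { eapply fr_pos_up; [auto|exact HQp|]. apply (diag_wi X D HP); auto. }
  set (W := exist _ (fmeet (gv X U) (gv X V)) Hpos : G X).
  eapply fr_ub'; auto.
  - exists W. split; [|reflexivity]. split; cbn; [apply fr_m1|apply fr_m2]; auto.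
  - apply i_gen_ub; auto.
Qed.

Lemma cover4 X D (HP : premetric X D) q : 0 < q ->
  fle (@ftop X) (fjoin (fun c => exists U : G X, diam_lt X D (gv X U) q /\ c = i_gen X D U)).
Proof.
  intros Hq. pose proof HP as HP'. pose proof (pm_fr2 X D HP) as H2. pmd HP.
  set (r := q * (1#4)). assert (Hr : 0 < r) by (unfold r; lra).
  eapply fr_trans; [auto|apply (proj2 (DG r Hr))|].
  unfold diag_s, pairs. apply fr_lub; auto. intros c (x&y&Hxy&->).
  apply fr_lp_reduce; auto. intros Y HYp HYle.
  assert (Hpos : pos (ball X D Y r)) by (eapply fr_pos_up; [auto|exact HYp|apply ball_ge; auto]).
  set (W := exist _ (ball X D Y r) Hpos : G X).
  eapply fr_ub'; auto.
  - exists W. split; [|reflexivity]. exists (r + r + r). split; [unfold r; lra|].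
    cbn. apply ball_diam; auto. intros p Hp; unfold rect in Hp; subst p.
    eapply cl_gen; [exact Hxy| |]; (eapply fr_trans; [auto|exact HYle|]); [apply fr_m1|apply fr_m2]; auto.
  - apply i_gen_ub; auto. exists r. split; auto. apply ball_wi; auto.
Qed.

Lemma cover5 X D (HP : premetric X D) U :
  fle (i_gen X D U) (fjoin (fun c => exists V : G X, wi X D (gv X V) (gv X U) /\ c = i_gen X D V)).
Proof.
  pose proof HP as HP'. pose proof (pm_fr2 X D HP) as H2. pmd HP.
  unfold i_gen at 1. apply fr_lub; auto. intros Y HY.
  apply fr_lp_reduce; auto. intros P HPp HPle.
  destruct (wi_anti X D HP' _ _ _ HPle HY) as (q&Hq&HPq).
  assert (Hr : 0 < q * (1#2)) by lra.
  assert (Hpos : pos (ball X D P (q * (1#2)))) by (eapply fr_pos_up; [auto|exact HPp|apply ball_ge; auto]).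
  set (V := exist _ (ball X D P (q * (1#2))) Hpos : G X).
  eapply fr_ub'; auto.
  - exists V. split; [|reflexivity]. exists (q * (1#2)). split; auto. cbn. apply ball_interp; auto.
  - apply i_gen_ub; auto. exists (q * (1#2)). split; auto. apply ball_wi; auto.
Qed.

Lemma cover_apply X D (HP : premetric X D) s B (Pp : G X -> Prop) :
  fle (ff X D s) (fjoin (fun c => exists W, Pp W /\ c = i_gen X D W)) ->
  (forall W, Pp W -> fle (ff X D (W :: s)) B) -> fle (ff X D s) B.
Proof.
  intros H1 H3. pose proof (pm_fr X D HP) as HX.
  eapply fr_trans; [auto|apply fr_le_distr; [auto|exact H1]|].
  apply fr_lub; auto. intros c (b&(W&HW&->)&->).
  eapply fr_trans; [auto|apply fr_mcomm; auto|]. apply (H3 W HW).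
Qed.

Lemma ff_In X D (HP : premetric X D) U t : In U t -> fle (ff X D t) (i_gen X D U).
Proof.
  pose proof (pm_fr X D HP) as HX.
  induction t as [|V t IH]; intros H; [destruct H|]. destruct H as [->|H]; cbn.
  - apply fr_m1; auto.
  - eapply fr_trans; [auto|apply fr_m2; auto|auto].
Qed.

Lemma ff_glb X D (HP : premetric X D) x t : (forall U, In U t -> fle x (i_gen X D U)) -> fle x (ff X D t).
Proof.
  pose proof (pm_fr X D HP) as HX.
  induction t as [|V t IH]; intros H; cbn; [apply fr_top; auto|].
  apply fr_glb; auto. apply H; left; auto. apply IH; intros; apply H; right; auto.
Qed.

Lemma ff_incl X D (HP : premetric X D) s t : incl s t -> fle (ff X D t) (ff X D s).
Proof.
  intros H. apply ff_glb; auto. intros U HU. apply ff_In; auto.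
Qed.

Lemma J_ideal X D (HP : premetric X D) (B : fcar X) : compl_ideal X D (fun t => fle (ff X D t) B).
Proof.
  pose proof (pm_fr X D HP) as HX.
  split; [|split; [|split; [|split]]].
  - intros s t H1 H3. eapply fr_trans; [auto|apply ff_incl; eauto|auto].
  - intros s U V HUV HU H. eapply fr_trans; [auto| |exact H]. cbn. apply fr_glb; auto using fr_refl.
    eapply fr_trans; [auto|apply ff_In; eauto|]. apply i_gen_mono; auto.
  - intros s U V HU HV H. apply (cover_apply X D HP s B (fun W => fle (gv X W) (gv X U) /\ fle (gv X W) (gv X V))).
    + eapply fr_trans; [auto| |apply cover3; auto]. apply fr_glb; auto; apply ff_In; auto.
    + intros W [H1 H3]; apply H; auto.
  - intros s q Hq H. apply (cover_apply X D HP s B (fun U => diam_lt X D (gv X U) q)); auto.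
    eapply fr_trans; [auto|apply fr_top; auto|apply cover4; auto].
  - intros s U HU H. apply (cover_apply X D HP s B (fun V => wi X D (gv X V) (gv X U))); auto.
    eapply fr_trans; [auto|apply ff_In; eauto|apply cover5; auto].
Qed.

Lemma cl_J X D (HP : premetric X D) (T : fcar (compl X D)) s :
  compl_cl X D T s -> fle (ff X D s) (i_star X D T).
Proof.
  intros H. apply (H _ (J_ideal X D HP _)). intros t Ht. unfold i_star. apply fr_ub; eauto using pm_fr.
Qed.

Lemma dir X D (HX : is_frame X) (I : list (G X) -> Prop) : compl_ideal X D I ->
  forall t s, incl t s -> (forall W, (forall U, In U t -> fle (gv X W) (gv X U)) -> I (W :: s)) -> I s.
Proof.
  intros HI. destruct (HI) as (Hdown&Hup&Hdir&Hsmall&Hreg).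
  induction t as [|U t IH]; intros s Hinc H.
  - apply (Hsmall s 1); [reflexivity|]. intros U _. apply H. intros U' [].
  - apply IH; [intros x Hx; apply Hinc; right; auto|]. intros W HW.
    apply (Hdir (W :: s) U W); [right; apply Hinc; left; auto|left; auto|].
    intros W' H1 H3. apply (Hdown (W' :: s)); [|intros x [->|Hx]; [left|right; right]; auto].
    apply H. intros U' [->|HU']; auto.
    eapply fr_trans; [exact HX|exact H3|apply HW; auto].
Qed.

Lemma ff_below X D (HP : premetric X D) (V W : G X) s : wi X D (gv X V) (gv X W) ->
  (forall U, In U s -> fle (gv X W) (gv X U)) -> fle (gv X V) (ff X D (W :: s)).
Proof.
  intros H1 H3. apply ff_glb; auto. intros U [<-|HU]; apply i_gen_ub; auto.
  eapply wi_mono2; eauto.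
Qed.

Theorem mainTheorem16 (X : FrameOps) (D : Q -> fcar (prodF X X)) :
  premetric X D ->
  fiberwise_dense (compl X D) X (i_star X D) /\ locally_positive (compl X D).
Proof.
  intros HP. pose proof (pm_fr X D HP) as HX.
  split.
  - intros P. split.
    + intros s Hs I HI HT. apply HT. exists (pstar (compl X D) P). split; auto. apply fr_refl; auto.
    + intros s (S&HS&Hs) I HI HT. destruct (HI) as (Hdown&Hup&Hdir&Hsmall&Hreg).
      apply (dir X D HX I HI s s (incl_refl s)). intros W HW.
      apply (Hreg (W :: s) W); [left; auto|]. intros V HV.
      assert (HPr : P).
      { assert (T : fle (gv X V) (i_star X D (pstar (compl X D) P))).
        { eapply fr_trans; [auto|apply (ff_below X D HP V W s); auto|].
          eapply fr_trans; [auto|apply (ff_incl X D HP s); intros x Hx; right; auto|].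
          eapply fr_trans; [auto| |exact HS]. unfold i_star. apply fr_ub; eauto. }
        destruct (proj2_sig V _ T) as (c&t&(S0&(HP0&_)&_)&_). exact HP0. }
      apply HT. exists (fun _ => True). split; [split; auto|]. exact Logic.I.
  - intros U. split.
    + intros s Hs I HI HT. destruct (HI) as (Hdown&Hup&Hdir&Hsmall&Hreg).
      apply (dir X D HX I HI s s (incl_refl s)). intros W HW.
      apply (Hreg (W :: s) W); [left; auto|]. intros V HV.
      apply (Hdown (W :: s)); [|intros x Hx; right; auto].
      apply HT. exists (fun t => t = W :: s). split; [|reflexivity]. split.
      * intros S HS. specialize (HS (W :: s) eq_refl).
        pose proof (cl_J X D HP _ _ HS) as T.
        assert (T2 : fle (gv X V) (i_star X D (fjoin S))).
        { eapply fr_trans; [auto|apply (ff_below X D HP V W s); auto|exact T]. }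
        destruct (proj2_sig V _ T2) as (c&t&(S0&HS0&_)&_). eauto.
      * intros t -> I' HI' HU'. destruct (HI') as (Hd'&_).
        apply (Hd' s); [apply HU'; auto|intros x Hx; right; auto].
    + intros s (S&(HSp&HSle)&Hs). apply HSle; auto.
Qed.
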